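(* Let $|\varphi_0\rangle,|\varphi_1\rangle,|\varphi_2\rangle,|\varphi_3\rangle,|\varphi_4\rangle$ be vectors in a complex Hilbert space, each of norm at most $1$, and let $\epsilon\ge0$ with $\big|\||\varphi_0\rangle\|-1\big|\le\epsilon$, $\big|\||\varphi_4\rangle\|-1\big|\le\epsilon$ and $\||\varphi_0\rangle+|\varphi_4\rangle\|\le\epsilon$. Then $$\||\varphi_0\rangle+|\varphi_1\rangle\|^2+\||\varphi_1\rangle+|\varphi_2\rangle\|^2+\||\varphi_2\rangle+|\varphi_3\rangle\|^2+\||\varphi_3\rangle+|\varphi_4\rangle\|^2\le16\cos^2(\pi/8)+6\epsilon .$$
   Context: Norms are Euclidean norms on a complex inner product space. *)

(* Defs.v *)
From HB Require Import structures.
From mathcomp Require Import all_boot all_order all_algebra.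
From mathcomp Require Import all_classical all_reals all_analysis.
From mathcomp Require Import complex.
Set Implicit Arguments. Unset Strict Implicit. Unset Printing Implicit Defensive.
Import Order.TTheory GRing.Theory Num.Theory.
Local Open Scope ring_scope.

Record inner_product (R : realType) (V : lmodType R[i]) (ip : V -> V -> R[i]) : Prop := {
  ip_linear : forall (a : R[i]) (u v w : V), ip (a *: u + v) w = a * ip u w + ip v w;
  ip_conjsym : forall u v : V, ip v u = Num.conj (ip u v);
  ip_posdef : forall v : V, v != 0 -> 0 < ip v v
}.

Definition ipnorm (R : realType) (V : lmodType R[i]) (ip : V -> V -> R[i]) (v : V) : R :=
  Num.sqrt (complex.Re (ip v v)).

(* Main.v *)
Require Import Defs.
From HB Require Import structures.
From mathcomp Require Import all_boot all_order all_algebra.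
From mathcomp Require Import all_classical all_reals all_analysis.
From mathcomp Require Import complex.
From mathcomp Require Import ring lra.
Import Order.TTheory GRing.Theory Num.Theory.
Set Implicit Arguments.
Local Open Scope ring_scope.

Section IP.
Variables (R : realType) (V : lmodType R[i]) (ip : V -> V -> R[i]).
Hypothesis Hip : inner_product ip.

Lemma ReD (x y : R[i]) : complex.Re (x + y) = complex.Re x + complex.Re y.
Proof. by case: x; case: y. Qed.
Lemma ReN (x : R[i]) : complex.Re (- x) = - complex.Re x.
Proof. by case: x. Qed.
Lemma ReMc (c : R) (x : R[i]) : complex.Re ((c%:C)%C * x) = c * complex.Re x.
Proof. by case: x => a b /=; rewrite mul0r subr0. Qed.
Lemma Reconj (x : R[i]) : complex.Re (Num.conj x) = complex.Re x.
Proof. by case: x. Qed.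

Lemma ipD u v w : ip (u + v) w = ip u w + ip v w.
Proof. by have := ip_linear Hip 1 u v w; rewrite scale1r mul1r. Qed.
Lemma ip0 w : ip 0 w = 0.
Proof. have h := ipD 0 0 w; rewrite addr0 in h.
by apply: (addrI (ip 0 w)); rewrite addr0 -h. Qed.
Lemma ipZ a u w : ip (a *: u) w = a * ip u w.
Proof. by have := ip_linear Hip a u 0 w; rewrite addr0 ip0 addr0. Qed.
Lemma ipN u w : ip (- u) w = - ip u w.
Proof. by rewrite -scaleN1r ipZ mulN1r. Qed.

Definition B u v := complex.Re (ip u v).
Lemma Bsym u v : B u v = B v u.
Proof. by rewrite /B (ip_conjsym Hip u v) Reconj. Qed.
Lemma BDl u v w : B (u + v) w = B u w + B v w.
Proof. by rewrite /B ipD ReD. Qed.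
Lemma BDr u v w : B w (u + v) = B w u + B w v.
Proof. by rewrite Bsym BDl !(Bsym w). Qed.
Lemma BNl u w : B (- u) w = - B u w.
Proof. by rewrite /B ipN ReN. Qed.
Lemma BNr u w : B w (- u) = - B w u.
Proof. by rewrite Bsym BNl Bsym. Qed.
Lemma BZl (c : R) u w : B ((c%:C)%C *: u) w = c * B u w.
Proof. by rewrite /B ipZ ReMc. Qed.
Lemma BZr (c : R) u w : B w ((c%:C)%C *: u) = c * B w u.
Proof. by rewrite Bsym BZl Bsym. Qed.

Lemma B0 w : B 0 w = 0.
Proof. by rewrite /B ip0. Qed.

Lemma Bpos v : v != 0 -> 0 < B v v.
Proof. by move=> /(ip_posdef Hip); rewrite ltcE => /andP[_]. Qed.
Lemma Bge0 v : 0 <= B v v.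
Proof. have [->|/Bpos/ltW//] := eqVneq v 0. by rewrite B0. Qed.
Lemma ipnorm2 v : ipnorm ip v ^+ 2 = B v v.
Proof. by rewrite /ipnorm sqr_sqrtr // Bge0. Qed.

Lemma ipnorm_ge0 v : 0 <= ipnorm ip v.
Proof. exact: sqrtr_ge0. Qed.

Lemma Bnorm_le v (e : R) : ipnorm ip v <= e -> B v v <= e ^+ 2.
Proof.
move=> h; rewrite -ipnorm2; rewrite ler_pXn2r ?nnegrE ?ipnorm_ge0 //.
exact: le_trans (ipnorm_ge0 v) h.
Qed.

Lemma cs_lite u d : B u u <= 4 -> B u d <= 2 * ipnorm ip d.
Proof.
move=> hu.
have [->|dn0] := eqVneq d 0.
  by rewrite Bsym B0 mulr_ge0 // ipnorm_ge0.
set de := ipnorm ip d.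
have hdd : B d d = de ^+ 2 by rewrite /de ipnorm2.
have dpos : 0 < de by rewrite /de /ipnorm sqrtr_gt0 Bpos.
have h := Bge0 (((de / 2)%:C)%C *: u - d).
rewrite !(BDl, BDr, BNl, BNr, BZl, BZr) (Bsym d u) hdd in h.
nra.
Qed.
End IP.
Lemma trig_fact (R : realType) : exists c : R,
  0 < c /\ 2 * c ^+ 2 = 1 /\ 16 * cos (pi / 8) ^+ 2 = 8 + 8 * c.
Proof.
exists (cos (pi / 4)).
have cpos : 0 < cos (pi / 4 : R).
  rewrite cos_gt0_pihalf//.
  rewrite ltr_pM2l ?pi_gt0// ltf_pV2 ?qualifE//= ltr_nat andbT.
  by rewrite (@lt_trans _ _ 0)// ?oppr_lt0 ?divr_gt0 ?pi_gt0.
have hs : sin (pi / 4 : R) = cos (pi / 4).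
  have := tan_piquarter R; rewrite /tan => h.
  by rewrite -(divfK (lt0r_neq0 cpos) (sin _)) h mul1r.
split => //; split.
  by have := cos2Dsin2 (pi / 4 : R); rewrite hs => h; lra.
have -> : (pi / 4 : R) = (pi / 8) *+ 2.
  by rewrite mulr2n; field.
rewrite cos_mulr2n; lra.
Qed.

Theorem corollaryE5 (R : realType) (V : lmodType R[i]) (ip : V -> V -> R[i])
  (Hip : inner_product ip) (phi0 phi1 phi2 phi3 phi4 : V) (eps : R) :
  ipnorm ip phi0 <= 1 -> ipnorm ip phi1 <= 1 -> ipnorm ip phi2 <= 1 ->
  ipnorm ip phi3 <= 1 -> ipnorm ip phi4 <= 1 ->
  0 <= eps ->
  `|ipnorm ip phi0 - 1| <= eps ->
  `|ipnorm ip phi4 - 1| <= eps ->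
  ipnorm ip (phi0 + phi4) <= eps ->
  ipnorm ip (phi0 + phi1) ^+ 2 + ipnorm ip (phi1 + phi2) ^+ 2
    + ipnorm ip (phi2 + phi3) ^+ 2 + ipnorm ip (phi3 + phi4) ^+ 2
  <= 16 * cos (pi / 8) ^+ 2 + 6 * eps.
Proof.
move=> h0 h1 h2 h3 h4 he _ _ hd.
have [c [cpos [hc ->]]] := trig_fact R.
set s := 2 * c.
have hss : s * s = 2 by rewrite /s; lra.
have spos : 0 < s by rewrite /s; lra.
have N0 := @Bnorm_le _ _ _ Hip _ _ h0; have N1 := @Bnorm_le _ _ _ Hip _ _ h1; have N2 := @Bnorm_le _ _ _ Hip _ _ h2.
have N3 := @Bnorm_le _ _ _ Hip _ _ h3; have N4 := @Bnorm_le _ _ _ Hip _ _ h4.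
rewrite expr1n in N0 N1 N2 N3 N4.
have G0 := Bge0 Hip phi0; have G1 := Bge0 Hip phi1; have G2 := Bge0 Hip phi2.
have G3 := Bge0 Hip phi3; have G4 := Bge0 Hip phi4.
have hdd := @Bnorm_le _ _ _ Hip _ _ hd.
have P30 := Bge0 Hip (phi3 + phi0).
have hcs := @cs_lite _ _ _ Hip (phi3 - phi0) (phi0 + phi4).
have F1 := Bge0 Hip (((s%:C)%C) *: phi0 - phi1 + phi3).
have F2 := Bge0 Hip (phi1 - ((s%:C)%C) *: phi2 + phi3).
have M01 := Bge0 Hip (phi0 - phi1); have M12 := Bge0 Hip (phi1 - phi2).
have M23 := Bge0 Hip (phi2 - phi3); have M34 := Bge0 Hip (phi3 - phi4).
rewrite !ipnorm2 //.
rewrite !(BDl Hip, BDr Hip, BNl Hip, BNr Hip, BZl Hip, BZr Hip) in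
  hdd P30 hcs F1 F2 M01 M12 M23 M34 *.
have k0 : s * (s * B _ ip phi0 phi0) = 2 * B _ ip phi0 phi0 by rewrite mulrA hss.
have k2 : s * (s * B _ ip phi2 phi2) = 2 * B _ ip phi2 phi2 by rewrite mulrA hss.
have e10 := Bsym Hip phi1 phi0; have e20 := Bsym Hip phi2 phi0.
have e30 := Bsym Hip phi3 phi0; have e40 := Bsym Hip phi4 phi0.
have e21 := Bsym Hip phi2 phi1; have e31 := Bsym Hip phi3 phi1.
have e41 := Bsym Hip phi4 phi1; have e32 := Bsym Hip phi3 phi2.
have e42 := Bsym Hip phi4 phi2; have e43 := Bsym Hip phi4 phi3.
rewrite e10 e30 e21 e31 e32 in F1 F2.
have {}hcs : B _ ip phi3 phi0 + B _ ip phi3 phi4 - B _ ip phi0 phi0 - B _ ip phi0 phi4 <= 2 * eps.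
  have := hcs ltac:(lra).
  have := @ipnorm_ge0 _ _ ip (phi0 + phi4); lra.
set X := B _ ip phi0 phi1 + B _ ip phi1 phi2 + B _ ip phi2 phi3 - B _ ip phi0 phi3.
have hX : s * X <= 4 by rewrite /X; lra.
have {}hX : X <= 2 * s by nra.
have hs : s = 2 * c by [].
clearbody s.
have [le1|gt1] := lerP eps 1.
  have : eps ^+ 2 <= eps by nra.
  rewrite /X in hX; lra.
have s1 : 1 <= s by nra.
rewrite /X in hX *; lra.
Qed.
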